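(* Let $L$ be a finite list with $t$ marked items, where $|L|/4 < t \le |L|$, and let $\theta \in (0,\pi/2]$ satisfy $\sin^2\theta = t/|L|$. For a positive integer $m$, let $P_m$ be the probability of finding a marked item when one chooses $j$ uniformly at random among the non-negative integers smaller than $m$, applies $j$ Grover iterations to the uniform superposition over $L$ and measures. Then $$P_m \ge \begin{cases} \frac14 & \text{for } m = 1,\\ \frac12 - \frac{1}{2\pi}\frac{1}{1-\frac{\pi^2}{96}} \approx 0.323 & \text{for } m > 1.\end{cases}$$
   Context: A Grover iteration is the unitary that reflects through the unmarked states followed by a reflection through the uniform superposition over $L$. For $\theta \ne \pi/2$ one has $P_m = \frac12 - \frac{\sin(4m\theta)}{4m\sin(2\theta)}$. *)

(* Defs.v *)
From HB Require Import structures.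
From mathcomp Require Import all_boot all_order all_algebra.
From mathcomp Require Import all_classical all_reals all_analysis.
Set Implicit Arguments. Unset Strict Implicit. Unset Printing Implicit Defensive.
Import Order.TTheory GRing.Theory Num.Theory.
Local Open Scope ring_scope.

Section Grover.
Variables (R : realType) (N : nat) (M : {set 'I_N}).

Definition unif_sup : 'cV[R]_N := \col_(i < N) (Num.sqrt (N%:R))^-1.

Definition refl_unmarked : 'M[R]_N :=
  \matrix_(i < N, j < N) (if i == j then (if i \in M then -1 else 1) else 0).

Definition refl_unif : 'M[R]_N := 2 *: (unif_sup *m unif_sup^T) - 1%:M.

Definition grover_iter : 'M[R]_N := refl_unif *m refl_unmarked.

Definition grover_state (j : nat) : 'cV[R]_N := iter j (mulmx grover_iter) unif_sup.

Definition success_prob (j : nat) : R :=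
  \sum_(x in M) (grover_state j x ord0) ^+ 2.

Definition P (m : nat) : R := (m%:R)^-1 * \sum_(j < m) success_prob j.

End Grover.

(* Main.v *)
Require Import Defs.
From HB Require Import structures.
From mathcomp Require Import all_boot all_order all_algebra.
From mathcomp Require Import all_classical all_reals all_analysis.
From mathcomp Require Import ring lra.
Import Order.TTheory GRing.Theory Num.Theory.
Import numFieldNormedType.Exports.
Local Open Scope ring_scope.

Local Open Scope classical_set_scope.
Section T.
Variable R : realType.

Lemma mono_aux (f df : R -> R) (b : R) : 0 <= b ->
  (forall x : R, is_derive x 1 f (df x)) -> (forall x : R, 0 <= x -> 0 <= df x) -> f 0 <= f b.
Proof.
move=> b0 hd hdf.
have cf : {within `[0, b], continuous f}.
  apply: continuous_subspaceT => x.
  have dx : derivable f x 1 by apply: ex_derive; exact: hd.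
  exact/differentiable_continuous/derivable1_diffP.
have [c cab E] := @MVT_segment R f df 0 b b0 (fun x _ => hd x) cf.
rewrite -subr_ge0 E subr0 mulr_ge0 // hdf //.
by move: cab; rewrite in_itv /= => /andP[].
Qed.

Lemma sin_le_id (x : R) : 0 <= x -> sin x <= x.
Proof.
move=> x0; rewrite -subr_ge0.
have := @mono_aux (fun x : R => x - sin x) (fun x : R => 1 - cos x) x x0.
by rewrite sin0 subr0; apply; move=> y _; rewrite subr_ge0 cos_le1.
Qed.

Lemma cos_ge (x : R) : 0 <= x -> 1 - x ^+ 2 / 2 <= cos x.
Proof.
move=> x0; rewrite -subr_ge0.
have := @mono_aux (fun x : R => cos x - (1 - x ^+ 2 / 2)) (fun x : R => x - sin x) x x0.
rewrite cos0 expr0n /= mul0r subr0 subrr; apply.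
  move=> y; apply: is_derive_eq. 
  rewrite !scaler0 ?addr0 ?add0r mul1r.
  by rewrite /GRing.scale /=; field.

by move=> y y0; rewrite subr_ge0; exact: sin_le_id.
Qed.
Lemma sin_ge (x : R) : 0 <= x -> x - x ^+ 3 / 6 <= sin x.
Proof.
move=> x0; rewrite -subr_ge0.
have := @mono_aux (fun x : R => sin x - (x - x ^+ 3 / 6)) (fun x : R => cos x - (1 - x ^+ 2 / 2)) x x0.
rewrite sin0 expr0n /= mul0r subr0 subrr; apply.
  move=> y; apply: is_derive_eq.
  by rewrite !scaler0 ?addr0 ?add0r ?mul1r /GRing.scale /=; field.
by move=> y y0; rewrite subr_ge0; exact: cos_ge.
Qed.

Lemma pi_le4 : pi <= 4 :> R.
Proof. have := @pihalf_lt2 R; lra. Qed.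

Lemma main_ineq (m : nat) (theta : R) : (1 < m)%N -> 0 < theta -> theta < pi / 2 ->
  1 / 4 < sin theta ^+ 2 ->
  sin ((4 * m)%:R * theta) <= 4 * m%:R * sin (theta *+ 2) * (2 * pi * (1 - pi ^+ 2 / 96))^-1.
Proof.
move=> hm ht0 htp hs.
have pi2 := @pi_ge2 R; have pi4 := pi_le4.
have hp2 : pi ^+ 2 <= 16 :> R.
  rewrite expr2; have h1 : 0 <= (4 - pi) * (4 + pi) :> R by apply: mulr_ge0; lra.
  nra.
have hQ : 0 < 2 * pi * (1 - pi ^+ 2 / 96) :> R by apply: mulr_gt0; lra.
set Q := 2 * pi * (1 - pi ^+ 2 / 96) in hQ *.
have hm' : (2 : R) <= m%:R by rewrite (ler_nat R 2 m).
set phi := pi - theta *+ 2.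
have hphi0 : 0 < phi by rewrite /phi mulr2n; lra.
have hphipi : phi < pi by rewrite /phi mulr2n; lra.
have e1 : sin (theta *+ 2) = sin phi.
  by rewrite /phi sinB sinpi cospi; ring.
have e2 : sin ((4 * m)%:R * theta) = - sin (m%:R * 2 * phi).
  rewrite -sinN.
  have -> : (4 * m)%:R * theta = - (m%:R * 2 * phi) + (pi *+ 2) *+ m.
    by rewrite /phi natrM; ring.
  by rewrite periodicn //; exact: sinD2pi.
rewrite e1 e2.
have sphi0 : 0 <= sin phi by apply: sin_ge0_pi; rewrite !ltW.
case: (lerP (m%:R * 2 * phi) pi) => hA.
  apply: (@le_trans _ _ 0).
    rewrite oppr_le0; apply: sin_ge0_pi; rewrite hA andbT.
    by apply: mulr_ge0; [lra|exact: ltW].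
  by apply: mulr_ge0; [apply: mulr_ge0; lra|rewrite invr_ge0 ltW].
rewrite ler_pdivlMr // (@le_trans _ _ Q) //.
  by rewrite -[leRHS]mul1r ler_pM2r // lerNl; exact: sin_geN1.
have hm0 : (0 : R) < m%:R by lra.
case: (lerP phi (pi / 2)) => hB.
  pose x : R := pi / (m%:R * 2).
  have hx0 : 0 < x by rewrite /x divr_gt0 //; lra.
  have hxphi : x < phi by rewrite /x ltr_pdivrMr; lra.
  have hxle : x <= pi / 2.
    rewrite /x ler_pdivrMr; last lra.
    have -> : pi / 2 * (m%:R * 2) = pi * m%:R :> R by field.
    nra.
  have hsx : sin x < sin phi.
    rewrite ltr_sin ?in_itv /= //; apply/andP; split; lra.
  have hsx2 := @sin_ge x (ltW hx0).
  have hQx : Q <= 4 * m%:R * (x - x ^+ 3 / 6).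
    rewrite -subr_ge0.
    have -> : 4 * m%:R * (x - x ^+ 3 / 6) - Q =
              pi ^+ 3 * (m%:R ^+ 2 - 4) / (48 * m%:R ^+ 2).
      by rewrite /x /Q; field; rewrite gt_eqF.
    apply: divr_ge0; last by apply: mulr_ge0; [lra| exact: exprn_ge0].
    apply: mulr_ge0; first by apply: exprn_ge0; lra.
    nra.
  apply: (le_trans hQx); rewrite ler_pM2l; last lra.
  lra.
have hc : cos phi < 0.
  have : 0 < sin (phi - pi / 2) by apply: sin_gt0_pi; apply/andP; split; lra.
  rewrite sinBpihalf; lra.
have ec : cos phi = 2 * sin theta ^+ 2 - 1.
  rewrite /phi cosB cospi sinpi cos_mulr2n cos2sin2; ring.
have es : sin phi = 2 * sin theta * cos theta.
  by rewrite -e1 sin_mulr2n; ring.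
have ess : sin phi ^+ 2 = 4 * sin theta ^+ 2 * (1 - sin theta ^+ 2).
  by rewrite es -cos2sin2; ring.
have hs3 : 3 / 4 < sin phi ^+ 2.
  rewrite ess; have hsl : sin theta ^+ 2 < 1 / 2 by lra.
  nra.
have h8 : 20 / 3 < 8 * sin phi.
  rewrite ltNge; apply/negP => h. 
  have : sin phi ^+ 2 <= (5 / 6) ^+ 2.
    rewrite ler_sqr ?nnegrE //; lra.
  lra.
have hQ3 : Q <= 20 / 3.
  have h : 0 <= (4 - pi) * (2 - (16 + 4 * pi + pi ^+ 2) / 48) :> R.
    apply: mulr_ge0; first lra.
    have : pi * 4 <= 16 :> R by lra.
    lra.
  rewrite /Q; nra.
nra.
Qed.

Lemma trig_sum (theta : R) m :
  2 * sin (theta *+ 2) * (2 * \sum_(j < m) sin ((2 * j + 1)%:R * theta) ^+ 2 - m%:R)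
  = - sin ((4 * m)%:R * theta).
Proof.
elim: m => [|m IH].
  by rewrite big_ord0 muln0 !mul0r mulr0 subr0 mulr0 sin0 oppr0.
rewrite big_ord_recr /=.
set a := (2 * m + 1)%:R * theta.
have ea : sin a ^+ 2 = (1 - cos (a *+ 2)) / 2.
  by rewrite cos_mulr2n cos2sin2; field.
have e0 : (4 * m)%:R * theta = a *+ 2 - theta *+ 2.
  by rewrite /a !natrD; ring.
have e1 : (4 * m.+1)%:R * theta = a *+ 2 + theta *+ 2.
  by rewrite /a !natrD; ring.
rewrite e0 in IH; rewrite e1.
rewrite ea -[m.+1]addn1 natrD.
set S := \sum_(i < m) _.
set A2 := a *+ 2; set T2 := theta *+ 2.
rewrite sinB in IH; rewrite (sinD A2 T2).
set u := sin A2; set v := cos A2; set w := sin T2; set z := cos T2.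
have -> : 2 * w * (2 * (S + (1 - v) / 2) - (m%:R + 1)) = 2 * w * (2 * S - m%:R) - 2 * w * v.
  by field.
by rewrite IH /u /v /w /z /A2 /T2; ring.
Qed.
End T.

Local Close Scope classical_set_scope.
Section G.
Variables (R : realType) (N : nat) (M : {set 'I_N}).

Lemma unmarked_entry (v : 'cV[R]_N) i :
  (@refl_unmarked R N M *m v) i ord0 = (if i \in M then - v i ord0 else v i ord0).
Proof.
rewrite mxE (bigD1 i) //= big1 => [|k hk]; last by rewrite mxE eq_sym (negbTE hk) mul0r.
by rewrite mxE eqxx addr0; case: ifP => _; rewrite ?mulN1r ?mul1r.
Qed.

Lemma unif_entry (w : 'cV[R]_N) i :
  (@refl_unif R N *m w) i ord0 =
  2 * ((Num.sqrt N%:R)^-1 * \sum_k ((Num.sqrt N%:R)^-1 * w k ord0)) - w i ord0.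
Proof.
rewrite /refl_unif mulmxBl mul1mx -scalemxAl -mulmxA !mxE big_ord1 !mxE.
congr (_ * (_ * _) - _).
by apply: eq_bigr => k _; rewrite !mxE.
Qed.


Lemma state_succ j : @grover_state R N M j.+1 = @grover_iter R N M *m @grover_state R N M j.
Proof. by []. Qed.

Lemma sum_split (A B : R) :
  \sum_(k < N) (if k \in M then A else B) = A *+ #|M| + B *+ (N - #|M|).
Proof.
rewrite (bigID (fun k => k \in M)) /=.
rewrite (eq_bigr (fun _ => A)) => [|k ->] //.
rewrite [X in _ + X](eq_bigr (fun _ => B)) => [|k hk]; last by rewrite (negbTE hk).
rewrite !sumr_const; congr (_ + _ *+ _).
have h := cardC M; rewrite card_ord in h.
rewrite (eq_card (B := [predC M])) //.
move: h; set a := #|M|; set b := #|[predC M]|.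
by move=> <-; rewrite addKn.
Qed.


Lemma ifif (b : bool) (x y : R) :
  (if b then - (if b then x else y) else (if b then x else y)) = if b then - x else y.
Proof. by case: b. Qed.

Lemma state_eq (theta : R) (hN : (0 < N)%N) (htN : (#|M| <= N)%N)
  (hs2 : sin theta ^+ 2 = #|M|%:R / N%:R) (hs : sin theta != 0) j i :
  @grover_state R N M j i ord0 =
  if i \in M then sin ((2 * j + 1)%:R * theta) / (sin theta * Num.sqrt N%:R)
  else cos ((2 * j + 1)%:R * theta) / (cos theta * Num.sqrt N%:R).
Proof.
set r := Num.sqrt N%:R.
move: hs2 hs; set s := sin theta; set c := cos theta => hs2 hs.
have hN' : (0 : R) < N%:R by rewrite ltr0n.
have hr : 0 < r by rewrite sqrtr_gt0.
have hr2 : r ^+ 2 = N%:R by rewrite sqr_sqrtr // ltW.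
have ht : (#|M|%:R : R) = r ^+ 2 * s ^+ 2.
  by rewrite hs2 hr2 mulrC divfK // gt_eqF.
have hNt : ((N - #|M|)%N%:R : R) = r ^+ 2 * c ^+ 2.
  by rewrite natrB // ht hr2 /c cos2sin2 -/s; ring.
have hc i0 : i0 \notin M -> c != 0.
  move=> hi0; apply/eqP => c0.
  have : (#|M| < N)%N.
    have h := cardC M; rewrite card_ord in h.
    have : (0 < #|[predC M]|)%N by apply/card_gt0P; exists i0.
    by move: h; set a := #|M|; set b := #|[predC M]| => <- hb; rewrite -addn1 leq_add2l.
  rewrite -subn_gt0 -(ltr0n R) hNt c0; lra.
elim: j i => [|j IH] i.
  rewrite /grover_state /= /unif_sup mxE mul1r -/r -/s -/c.
  case: ifP => hi.
    by field; rewrite hs gt_eqF.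
  by field; rewrite (hc i) ?hi // gt_eqF.
rewrite state_succ /grover_iter -mulmxA unif_entry unmarked_entry IH ifif -/r.
under eq_bigr => k _ do rewrite unmarked_entry IH ifif.
rewrite -mulr_sumr sum_split.
have -> : ((2 * j.+1 + 1)%:R * theta = (2 * j + 1)%:R * theta + theta + theta :> R).
  rewrite !natrD !natrM; ring.
rewrite !(sinD, cosD) -/s -/c.
set X := sin ((2 * j + 1)%:R * theta); set Y := cos ((2 * j + 1)%:R * theta).
have e1 : (- (X / (s * r))) *+ #|M| = - r * s * X.
  rewrite -mulr_natr ht; field; rewrite hs gt_eqF //.
have e2 : (Y / (c * r)) *+ (N - #|M|) = c * r * Y.
  rewrite -mulr_natr hNt.
  have [c0|c0] := eqVneq c 0; first by rewrite c0 expr0n /= !(mulr0, mul0r).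
  field; rewrite c0 gt_eqF //.
rewrite e1 e2.
have hcs : c ^+ 2 + s ^+ 2 = 1 by exact: cos2Dsin2.
case: ifP => hi; apply/eqP; rewrite -subr_eq0; apply/eqP.
  transitivity (X / (s * r) * (1 - (c ^+ 2 + s ^+ 2))).
    by field; rewrite hs gt_eqF.
  by rewrite hcs subrr mulr0.
have hc0 := hc i (negbT hi).
transitivity (Y / (c * r) * (c ^+ 2 + s ^+ 2 - 1)).
  by field; rewrite hc0 gt_eqF.
by rewrite hcs subrr mulr0.
Qed.


Lemma success_eq (theta : R) (hN : (0 < N)%N) (htN : (#|M| <= N)%N)
  (hs2 : sin theta ^+ 2 = #|M|%:R / N%:R) (hs : sin theta != 0) j :
  @success_prob R N M j = sin ((2 * j + 1)%:R * theta) ^+ 2.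
Proof.
rewrite /success_prob.
under eq_bigr => x hx do rewrite (state_eq _ hN htN hs2 hs) hx.
rewrite sumr_const -(mulr_natr _ #|M|).
set r := Num.sqrt N%:R.
have hN' : (0 : R) < N%:R by rewrite ltr0n.
have hr : 0 < r by rewrite sqrtr_gt0.
have hr2 : r ^+ 2 = N%:R by rewrite sqr_sqrtr // ltW.
have ht : (#|M|%:R : R) = r ^+ 2 * sin theta ^+ 2.
  by rewrite hs2 hr2 mulrC divfK // gt_eqF.
by rewrite ht; field; rewrite hs gt_eqF.
Qed.

End G.

Theorem lemma14 (R : realType) (N : nat) (M : {set 'I_N}) (theta : R) (m : nat) :
  (N < 4 * #|M|)%N -> (#|M| <= N)%N ->
  0 < theta -> theta <= pi / 2 ->
  sin theta ^+ 2 = #|M|%:R / N%:R ->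
  (0 < m)%N ->
  (m = 1%N -> 1 / 4 <= @P R N M m) /\
  ((1 < m)%N -> 1 / 2 - (2 * pi)^-1 * (1 - pi ^+ 2 / 96)^-1 <= @P R N M m).
Proof.
move=> hNM htN ht0 htp hs2 hm.
have ht : (0 < #|M|)%N by move: hNM; case: #|M| => //; rewrite muln0.
have hN : (0 < N)%N := leq_trans ht htN.
have pi2 := @pi_ge2 R; have pi4 := pi_le4 R.
have hsp : 0 < sin theta by apply: sin_gt0_pi; apply/andP; split => //; lra.
have hs : sin theta != 0 by rewrite gt_eqF.
have hN' : (0 : R) < N%:R by rewrite ltr0n.
have hs4 : 1 / 4 < sin theta ^+ 2.
  have hc : (N%:R : R) < 4 * #|M|%:R by rewrite -natrM ltr_nat.
  rewrite hs2 ltr_pdivlMr //; lra.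
have PE : @P R N M m = m%:R^-1 * \sum_(j < m) sin ((2 * j + 1)%:R * theta) ^+ 2.
  by rewrite /P; congr (_ * _); apply: eq_bigr => j _; rewrite (@success_eq R N M theta hN htN hs2 hs).
rewrite PE; split.
  move=> ->; rewrite big_ord1 /= invr1 !mul1r.
  by rewrite mul1r in hs4; exact: ltW.
move=> hm1.
have hm0 : (0 : R) < m%:R by rewrite ltr0n.
have hK : 0 < (2 * pi)^-1 * (1 - pi ^+ 2 / 96)^-1 :> R.
  have hp2 : pi ^+ 2 <= 16 :> R.
    rewrite expr2; have h1 : 0 <= (4 - pi) * (4 + pi) :> R by apply: mulr_ge0; lra.
    nra.
  by apply: mulr_gt0; rewrite invr_gt0; lra.
set K := (2 * pi)^-1 * (1 - pi ^+ 2 / 96)^-1 in hK *.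
set T := \sum_(j < m) _.
case: (ltrP theta (pi / 2)) => htp2; last first.
  have th : theta = pi / 2 by apply/eqP; rewrite eq_le htp htp2.
  have -> : T = m%:R.
    rewrite /T (eq_bigr (fun _ => 1)) ?sumr_const ?card_ord //.
    move=> j _; rewrite th.
    have -> : (2 * j + 1)%:R * (pi / 2) = pi / 2 + pi *+ j :> R.
      by rewrite natrD natrM; field.
    rewrite alternatingn; last exact: sinDpi.
    by rewrite sin_pihalf mulr1 -exprM mulnC exprM sqrrN expr1n expr1n.
  rewrite mulVf ?gt_eqF //; lra.
have hS : 0 < sin (theta *+ 2).
  by apply: sin_gt0_pi; rewrite mulr2n; apply/andP; split; lra.
have E := @trig_sum R theta m.
have I := @main_ineq R m theta hm1 ht0 htp2 hs4.
rewrite -/T in E.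
have K' : (2 * pi * (1 - pi ^+ 2 / 96))^-1 = K by rewrite /K invfM.
rewrite K' in I.
have h0 : 0 <= (2 * sin (theta *+ 2)) * (2 * T - m%:R + 2 * m%:R * K).
  nra.
rewrite pmulr_rge0 in h0; last lra.
rewrite [m%:R^-1 * T]mulrC ler_pdivlMr //.
nra.
Qed.
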